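(* Let $V=2V_2\oplus V_4$ and $R=\mathcal{O}(V)^{\mathrm{SL}_2(\mathbb{C})}$. Then $R$ has no homogeneous system of parameters with degrees $2,2,2,2,3,3,3,4$; indeed, all invariants of degree $2$ or $3$ vanish at every point $(ax^2,bx^2,xy^3)$, $a,b\in\mathbb{C}$.
   Context: $V_k$ is the $\mathrm{SL}_2(\mathbb{C})$-module of complex binary forms of degree $k$ in $x,y$; $2V_2=V_2\oplus V_2$; $R$ is the graded algebra of invariant polynomial functions on $V$. A homogeneous system of parameters is a set of algebraically independent homogeneous elements of positive degree over whose generated subalgebra $R$ is integral. *)

(* Defs.v *)
From HB Require Import structures.
From mathcomp Require Import all_boot all_algebra.
From mathcomp Require Import mpoly.
Set Implicit Arguments. Unset Strict Implicit. Unset Printing Implicit Defensive.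
Import GRing.Theory Num.Theory.
Local Open Scope ring_scope.

(* V = 2V_2 (+) V_4 has dimension 3 + 3 + 5 = 11.  A point of V is a
   coordinate vector v : 'I_11 -> C, where
     v 0, v 1, v 2          are the coefficients of the first  quadratic form,
     v 3, v 4, v 5          are the coefficients of the second quadratic form,
     v 6, ..., v 10         are the coefficients of the quartic form,
   with the convention that the coefficient vector (c_0,...,c_k) represents
   the binary form  sum_i c_i x^(k-i) y^i . *)

Section BinaryForms.
Variable C : numClosedFieldType.

Definition coordV (v : 'I_11 -> C) (j : nat) : C := v (inord j).

Definition bform (k off : nat) (v : 'I_11 -> C) (x y : C) : C :=
  \sum_(i < k.+1) coordV v (off + i) * x ^+ (k - i) * y ^+ i.

Definition formA (v : 'I_11 -> C) := bform 2 0 v.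
Definition formB (v : 'I_11 -> C) := bform 2 3 v.
Definition formC (v : 'I_11 -> C) := bform 4 6 v.

(* g = [[a, b], [c, d]] in SL_2(C) sends v to v' (i.e. v' = g . v), where
   (g . f)(x, y) = f (g^{-1} (x, y)), i.e. (g . f)(g (x,y)) = f (x,y);
   the action on V is componentwise. *)
Definition SL2_moves (a b c d : C) (v v' : 'I_11 -> C) : Prop :=
  forall x y : C,
    [/\ formA v' (a * x + b * y) (c * x + d * y) = formA v x y,
        formB v' (a * x + b * y) (c * x + d * y) = formB v x y &
        formC v' (a * x + b * y) (c * x + d * y) = formC v x y].

Definition SL2_invariant (p : {mpoly C[11]}) : Prop :=
  forall a b c d : C, a * d - b * c = 1 ->
  forall v v' : 'I_11 -> C, SL2_moves a b c d v v' -> meval v' p = meval v p.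

Definition in_gen_subalg (m : nat) (f : 'I_m -> {mpoly C[11]})
  (r : {mpoly C[11]}) : Prop :=
  exists Q : {mpoly C[m]}, r = Q \mPo [tuple f i | i < m].

Definition alg_indep (m : nat) (f : 'I_m -> {mpoly C[11]}) : Prop :=
  forall Q : {mpoly C[m]}, Q \mPo [tuple f i | i < m] = 0 -> Q = 0.

Definition R_integral_over (m : nat) (f : 'I_m -> {mpoly C[11]}) : Prop :=
  forall r : {mpoly C[11]}, SL2_invariant r ->
  exists (n : nat) (s : 'I_n -> {mpoly C[11]}),
    (forall i, in_gen_subalg f (s i)) /\
    r ^+ n + \sum_(i < n) s i * r ^+ i = 0.

Definition is_hsop (m : nat) (f : 'I_m -> {mpoly C[11]}) : Prop :=
  [/\ forall i, SL2_invariant (f i),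
      forall i, exists2 d : nat, (0 < d)%N & f i \is d.-homog,
      alg_indep f &
      R_integral_over f].

(* the point (a x^2, b x^2, x y^3) of V *)
Definition special_point (a b : C) : 'I_11 -> C :=
  fun j => if val j == 0%N then a
           else if val j == 3%N then b
           else if val j == 9%N then 1 else 0.

End BinaryForms.

Definition hsop_degs : 'I_8 -> nat := fun i => nth 0%N [:: 2; 2; 2; 2; 3; 3; 3; 4]%N i.

(* Main.v *)
Require Import Defs.
From HB Require Import structures.
From mathcomp Require Import all_boot all_algebra.
From mathcomp Require Import mpoly ring.
Set Implicit Arguments. Unset Strict Implicit. Unset Printing Implicit Defensive.
Import GRing.Theory Num.Theory.
Local Open Scope ring_scope.

Section S.
Variable C : numClosedFieldType.
Local Notation V := ('I_11 -> C).
Definition mkv (g : nat -> C) : V := fun j => g (val j).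
Lemma coordV_mkv g k : (k < 11)%N -> coordV (mkv g) k = g k.
Proof. by move=> H; rewrite /coordV /mkv /= inordK. Qed.
Lemma bform2E o (v : V) x y : bform 2 o v x y =
  coordV v o * x ^+ 2 + coordV v (o + 1) * x * y + coordV v (o + 2) * y ^+ 2.
Proof. rewrite /bform !big_ord_recr big_ord0 /= addn0; ring. Qed.
Lemma bform4E o (v : V) x y : bform 4 o v x y =
  coordV v o * x ^+ 4 + coordV v (o + 1) * x ^+ 3 * y + coordV v (o + 2) * x ^+ 2 * y ^+ 2
  + coordV v (o + 3) * x * y ^+ 3 + coordV v (o + 4) * y ^+ 4.
Proof. rewrite /bform !big_ord_recr big_ord0 /= addn0; ring. Qed.

Definition kap (k : nat) : nat := nth 0%N [:: 4;16;64;4;16;64;1;4;16;64;256]%N k.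
Definition Dt (v : V) : V := mkv (fun k => (kap k)%:R / 16 * coordV v k).

Lemma Dt_moves (v : V) : SL2_moves 2 0 0 (2^-1) v (Dt v).
Proof.
move=> x y; rewrite /Defs.formA /Defs.formB /Defs.formC !bform2E !bform4E /= /Dt !coordV_mkv //=.
rewrite /kap /=.
split; field; by rewrite ?pnatr_eq0.
Qed.

Definition U1 (v : V) := mkv (fun k => let c := coordV v in match k with
 | 0 => c 0%N | 1 => 2*c 0%N + c 1%N | 2 => c 0%N + c 1%N + c 2%N
 | 3 => c 3%N | 4 => 2*c 3%N + c 4%N | 5 => c 3%N + c 4%N + c 5%N
 | 6 => c 6%N | 7 => 4 * c 6%N + c 7%N | 8 => 6 * c 6%N + 3 * c 7%N + c 8%N
 | 9 => 4 * c 6%N + 3 * c 7%N + 2 * c 8%N + c 9%N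
 | 10 => c 6%N + c 7%N + c 8%N + c 9%N + c 10%N | _ => 0 end).
Definition U2 (v : V) := mkv (fun k => let c := coordV v in match k with
 | 0 => c 0%N + c 1%N + c 2%N | 1 => c 1%N + 2 * c 2%N | 2 => c 2%N
 | 3 => c 3%N + c 4%N + c 5%N | 4 => c 4%N + 2 * c 5%N | 5 => c 5%N
 | 6 => c 6%N + c 7%N + c 8%N + c 9%N + c 10%N
 | 7 => c 7%N + 2 * c 8%N + 3 * c 9%N + 4 * c 10%N
 | 8 => c 8%N + 3 * c 9%N + 6 * c 10%N
 | 9 => c 9%N + 4 * c 10%N | 10 => c 10%N | _ => 0 end).

Lemma U1_moves (v : V) : SL2_moves 1 (-1) 0 1 v (U1 v).
Proof.
move=> x y; rewrite /Defs.formA /Defs.formB /Defs.formC !bform2E !bform4E /= /U1 !coordV_mkv //=.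
split; ring.
Qed.
Lemma U2_moves (v : V) : SL2_moves 1 0 (-1) 1 v (U2 v).
Proof.
move=> x y; rewrite /Defs.formA /Defs.formB /Defs.formC !bform2E !bform4E /= /U2 !coordV_mkv //=.
split; ring.
Qed.

Definition vadd (u w : V) : V := fun i => u i + w i.
Definition vscal (k : C) (u : V) : V := fun i => k * u i.
Definition e (k : nat) : V := fun j => if val j == k then 1 else 0.
Lemma coordV_e k m : (m < 11)%N -> coordV (e k) m = if m == k then 1 else 0.
Proof. by move=> H; rewrite /coordV /e /= inordK. Qed.

Ltac vcase := let j := fresh "j" in let Hj := fresh "Hj" in
  move=> [j Hj]; case: j Hj => [|[|[|[|[|[|[|[|[|[|[|j]]]]]]]]]]] Hj.

Lemma U1_add u w : vadd (U1 u) (U1 w) =1 U1 (vadd u w).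
Proof. by vcase; rewrite /U1 /mkv /vadd /coordV /=; ring. Qed.
Lemma U2_add u w : vadd (U2 u) (U2 w) =1 U2 (vadd u w).
Proof. by vcase; rewrite /U2 /mkv /vadd /coordV /=; ring. Qed.
Lemma U1e0 o : o = 0%N \/ o = 3%N ->
  U1 (e o) =1 vadd (e o) (vadd (vscal 2 (e o.+1)) (e o.+2)).
Proof.
by case=> ->; vcase; rewrite /U1 /mkv /vadd /vscal /= ?coordV_e // /e /=; ring.
Qed.
Lemma U1e8 : U1 (e 8) =1 vadd (e 8) (vadd (vscal 2 (e 9)) (e 10)).
Proof. by vcase; rewrite /U1 /mkv /vadd /vscal /= ?coordV_e // /e /=; ring. Qed.
Lemma U2e1 o : o = 0%N \/ o = 3%N -> U2 (e o.+1) =1 vadd (e o) (e o.+1).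
Proof.
by case=> ->; vcase; rewrite /U2 /mkv /vadd /vscal /= ?coordV_e // /e /=; ring.
Qed.
Lemma U2e9 : U2 (e 9) =1 vadd (e 6) (vadd (vscal 3 (e 7)) (vadd (vscal 3 (e 8)) (e 9))).
Proof. by vcase; rewrite /U2 /mkv /vadd /vscal /= ?coordV_e // /e /=; ring. Qed.
Lemma mdeg2 (n : nat) (m : 'X_{1..n}) : mdeg m = 2%N ->
  exists i j, forall v : 'I_n -> C, \prod_k v k ^+ m k = v i * v j.
Proof.
move=> H.
have [i Hi] : exists i, (0 < m i)%N.
  apply/existsP; apply: contraT; rewrite negb_exists => /forallP Hn.
  move: H; rewrite mdegE big1 // => k _; move: (Hn k); rewrite lt0n negbK => /eqP.
  done.
pose m' := (m - U_(i))%MM.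
have Em : m = (m' + U_(i))%MM.
  apply/mnmP => k; rewrite mnmDE mnmBE mnm1E; case: eqP => [<-|_]; last by rewrite subn0 addn0.
  by rewrite subnK.
have : mdeg m' == 1%N by move: H; rewrite Em mdegD mdeg1 addn1 => -[->].
case/mdeg1P => j /eqP Ej.
exists i, j => v; rewrite Em Ej.
under eq_bigr do rewrite mnmDE exprD.
rewrite big_split /= mulrC; congr (_ * _).
  rewrite (bigD1 i) //= mnm1E eqxx expr1 big1 ?mulr1 // => k Hk; rewrite mnm1E eq_sym (negbTE Hk) expr0 //.
rewrite (bigD1 j) //= mnm1E eqxx expr1 big1 ?mulr1 // => k Hk; rewrite mnm1E eq_sym (negbTE Hk) expr0 //.
Qed.

Lemma meval_homog n d (p : {mpoly C[n]}) (k : C) (v : 'I_n -> C) :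
  p \is d.-homog -> meval (fun i => k * v i) p = k ^+ d * meval v p.
Proof.
move=> /dhomogP H; rewrite !mevalE big_distrr /=.
apply: eq_big_seq => m Hm; rewrite mulrCA; congr (_ * _).
under eq_bigr do rewrite exprMn.
rewrite big_split /= prodrXr -mdegE H //.
Qed.

Section Deg2.
Variable p : {mpoly C[11]}.
Hypothesis Hp : p \is 2.-homog.
Hypothesis Hinv : SL2_invariant p.

Definition Bq u w := meval (vadd u w) p - meval u p - meval w p.
Definition bm (m : 'X_{1..11}) (u w : V) :=
  \prod_k (vadd u w) k ^+ m k - \prod_k u k ^+ m k - \prod_k w k ^+ m k.

Lemma Bq_E u w : Bq u w = \sum_(m <- msupp p) p@_m * bm m u w.
Proof.
rewrite /Bq !mevalE -!sumrB; apply: eq_bigr => m _; rewrite /bm; ring.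
Qed.

Lemma Bq_addl u1 u2 w : Bq (vadd u1 u2) w = Bq u1 w + Bq u2 w.
Proof.
move/dhomogP: Hp => H; rewrite !Bq_E -big_split /=; apply: eq_big_seq => m Hm.
have [i [j E]] := mdeg2 (H m Hm); rewrite /bm !E /vadd; ring.
Qed.

Lemma Bq_scall k u w : Bq (vscal k u) w = k * Bq u w.
Proof.
move/dhomogP: Hp => H; rewrite !Bq_E big_distrr /=; apply: eq_big_seq => m Hm.
have [i [j E]] := mdeg2 (H m Hm); rewrite /bm !E /vadd /vscal; ring.
Qed.

Lemma Bq_sym u w : Bq u w = Bq w u.
Proof.
rewrite /Bq (@meval_eq _ _ (vadd u w) (vadd w u) p); last by move=> i; rewrite /vadd addrC.
ring.
Qed.

Lemma Bq_addr u w1 w2 : Bq u (vadd w1 w2) = Bq u w1 + Bq u w2.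
Proof. by rewrite Bq_sym Bq_addl !(Bq_sym u). Qed.
Lemma Bq_scalr k u w : Bq u (vscal k w) = k * Bq u w.
Proof. by rewrite Bq_sym Bq_scall Bq_sym. Qed.

Lemma Bq_diag u : Bq u u = 2 * meval u p.
Proof.
move/dhomogP: Hp => H; rewrite Bq_E mevalE big_distrr /=; apply: eq_big_seq => m Hm.
have [i [j E]] := mdeg2 (H m Hm); rewrite /bm !E /vadd; ring.
Qed.

Lemma Bq_eq u u' w w' : u =1 u' -> w =1 w' -> Bq u w = Bq u' w'.
Proof.
move=> Hu Hw; rewrite /Bq (meval_eq p Hu) (meval_eq p Hw); congr (_ - _ - _).
by apply: meval_eq => i; rewrite /vadd Hu Hw.
Qed.

Lemma Bq_lin (L : V -> V) s : (forall v, meval (L v) p = s * meval v p) ->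
  (forall u w, vadd (L u) (L w) =1 L (vadd u w)) ->
  forall u w, Bq (L u) (L w) = s * Bq u w.
Proof.
move=> HL Hadd u w; rewrite /Bq (meval_eq p (Hadd u w)) !HL; ring.
Qed.

Definition Dp (v : V) : V := fun j => (kap (val j))%:R * v j.

Lemma Dp_meval v : meval (Dp v) p = 256 * meval v p.
Proof.
have -> : meval (Dp v) p = meval (fun i => 16 * Dt v i) p.
  apply: meval_eq => j; rewrite /Dp /Dt /mkv /coordV inord_val.
  by field.
rewrite (@meval_homog _ _ p 16 (Dt v) Hp) (Hinv _ (Dt_moves v)).
  by rewrite -natrX.
by rewrite mulr0 subr0 mulfV // pnatr_eq0.
Qed.

Lemma Dp_add u w : vadd (Dp u) (Dp w) =1 Dp (vadd u w).
Proof. by move=> j; rewrite /Dp /vadd mulrDr. Qed.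

Definition Bk i j := Bq (e i) (e j).

Lemma BzE i j : Bq (e i) (e j) = (kap i * kap j == 256)%N%:R * Bk i j.
Proof.
have H := Bq_lin Dp_meval Dp_add (e i) (e j).
rewrite (Bq_eq (u' := vscal (kap i)%:R (e i)) (w' := vscal (kap j)%:R (e j))) in H;
  last first.
- by move=> k; rewrite /Dp /vscal /e; case: eqP => [->|]; rewrite ?mulr0.
- by move=> k; rewrite /Dp /vscal /e; case: eqP => [->|]; rewrite ?mulr0.
rewrite Bq_scall Bq_scalr mulrA -natrM in H.
rewrite /Bk; case: eqP => E; first by rewrite mul1r.
rewrite mul0r; apply/eqP; move/eqP: H; rewrite -subr_eq0 -mulrBl mulf_eq0 subr_eq0.
by rewrite eqr_nat; move/eqP: E => /negbTE ->.
Qed.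

Lemma meval_U1 v : meval (U1 v) p = 1 * meval v p.
Proof. by rewrite mul1r (Hinv _ (U1_moves v)) //; ring. Qed.
Lemma meval_U2 v : meval (U2 v) p = 1 * meval v p.
Proof. by rewrite mul1r (Hinv _ (U2_moves v)) //; ring. Qed.

Lemma solve2 (X Y : C) : 2 * X + 2 * Y = 0 -> X + 3 * Y = 0 -> X = 0.
Proof.
move=> H1 H2; have : 4 * X = 0.
  have -> : 4 * X = 3 * (2 * X + 2 * Y) - 2 * (X + 3 * Y) by ring.
  by rewrite H1 H2; ring.
by move/eqP; rewrite mulf_eq0 pnatr_eq0 /= => /eqP.
Qed.

Lemma Bk_sym i j : Bk i j = Bk j i.
Proof. exact: Bq_sym. Qed.

Lemma Key o : o = 0%N \/ o = 3%N -> Bk o 9 = 0.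
Proof.
move=> Ho.
have R1 := Bq_lin meval_U1 U1_add (e o) (e 8).
have R2 := Bq_lin meval_U2 U2_add (e o.+1) (e 9).
rewrite (Bq_eq (U1e0 Ho) U1e8) in R1.
rewrite (Bq_eq (U2e1 Ho) U2e9) in R2.
rewrite !(Bq_addl, Bq_addr, Bq_scall, Bq_scalr) in R1 R2.
case: Ho R1 R2 => -> R1 R2; rewrite !BzE /= in R1 R2;
move/eqP: R1; rewrite -subr_eq0 => /eqP R1;
move/eqP: R2; rewrite -subr_eq0 => /eqP R2.
- apply: (solve2 (Y := Bk 1 8)); [rewrite -R1 | rewrite -R2]; ring.
- apply: (solve2 (Y := Bk 4 8)); [rewrite -R1 | rewrite -R2]; ring.
Qed.

Lemma deg2_zero a b : meval (special_point a b) p = 0.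
Proof.
have H := Bq_diag (special_point a b).
rewrite (Bq_eq (u' := vadd (vscal a (e 0)) (vadd (vscal b (e 3)) (e 9)))
               (w' := vadd (vscal a (e 0)) (vadd (vscal b (e 3)) (e 9)))) in H;
  try by vcase; rewrite /special_point /vadd /vscal /e /=; ring.
rewrite !(Bq_addl, Bq_addr, Bq_scall, Bq_scalr) !BzE /= in H.
rewrite (Bk_sym 9 0) (Bk_sym 9 3) (@Key 0 (or_introl erefl)) (@Key 3 (or_intror erefl)) in H.
have : 2 * meval (special_point a b) p = 0 by rewrite -H; ring.
by move/eqP; rewrite mulf_eq0 pnatr_eq0 /= => /eqP.
Qed.
End Deg2.

Implicit Types (a b c d : C) (g : nat -> C).
Definition sub2 a b c d g (k : nat) : C := match k with
 | 0 => g 0%N * (a^+2) + g 1%N * (a * c) + g 2%N * (c^+2)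
 | 1 => g 0%N * (2 * a * b) + g 1%N * (b * c + a * d) + g 2%N * (2 * c * d)
 | 2 => g 0%N * (b^+2) + g 1%N * (b * d) + g 2%N * (d^+2)
 | _ => 0 end.
Definition sub4 a b c d g (k : nat) : C := match k with
 | 0 => g 0%N * (a^+4) + g 1%N * (a^+3 * c) + g 2%N * (a^+2 * c^+2) + g 3%N * (a * c^+3) + g 4%N * (c^+4)
 | 1 => g 0%N * (4 * a^+3 * b) + g 1%N * (3 * a^+2 * b * c + a^+3 * d) + g 2%N * (2 * a * b * c^+2 + 2 * a^+2 * c * d) + g 3%N * (b * c^+3 + 3 * a * c^+2 * d) + g 4%N * (4 * c^+3 * d)
 | 2 => g 0%N * (6 * a^+2 * b^+2) + g 1%N * (3 * a * b^+2 * c + 3 * a^+2 * b * d) + g 2%N * (b^+2 * c^+2 + 4 * a * b * c * d + a^+2 * d^+2) + g 3%N * (3 * b * c^+2 * d + 3 * a * c * d^+2) + g 4%N * (6 * c^+2 * d^+2)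
 | 3 => g 0%N * (4 * a * b^+3) + g 1%N * (b^+3 * c + 3 * a * b^+2 * d) + g 2%N * (2 * b^+2 * c * d + 2 * a * b * d^+2) + g 3%N * (3 * b * c * d^+2 + a * d^+3) + g 4%N * (4 * c * d^+3)
 | 4 => g 0%N * (b^+4) + g 1%N * (b^+3 * d) + g 2%N * (b^+2 * d^+2) + g 3%N * (b * d^+3) + g 4%N * (d^+4)
 | _ => 0 end.
Definition Kco (al ga : nat -> C) (k : nat) : C := match k with
 | 0 => 2 * al 0%N * ga 2%N - 3 * al 1%N * ga 1%N + 12 * al 2%N * ga 0%N
 | 1 => 6 * al 0%N * ga 3%N - 4 * al 1%N * ga 2%N + 6 * al 2%N * ga 1%N
 | 2 => 12 * al 0%N * ga 4%N - 3 * al 1%N * ga 3%N + 2 * al 2%N * ga 2%N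
 | _ => 0 end.
Definition disc (ka : nat -> C) := ka 1%N ^+ 2 - 4 * ka 0%N * ka 2%N.

Lemma Kco_sub a b c d al ga k : (k <= 2)%N ->
  Kco (sub2 a b c d al) (sub4 a b c d ga) k = (a * d - b * c) ^+ 2 * sub2 a b c d (Kco al ga) k.
Proof. by case: k => [|[|[|k]]] //= _; ring. Qed.

Lemma disc_sub a b c d ka : disc (sub2 a b c d ka) = (a * d - b * c) ^+ 2 * disc ka.
Proof. rewrite /disc /=; ring. Qed.
Lemma ext4 a b c d (v v' : V) :
  (forall x y, bform 4 6 v' (a * x + b * y) (c * x + d * y) = bform 4 6 v x y) ->
  forall k, (k <= 4)%N -> coordV v (6 + k) = sub4 a b c d (fun i => coordV v' (6 + i)) k.
Proof.
move=> H.
have h0 := H 1 0; have h4 := H 0 1; have h1 := H 1 1; have h2 := H 1 (-1); have h3 := H 1 2.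
rewrite (_ : bform 4 6 v 1 0 = coordV v 6) in h0; last by rewrite bform4E; ring.
rewrite (_ : bform 4 6 v 0 1 = coordV v 10) in h4; last by rewrite bform4E; ring.
rewrite (_ : bform 4 6 v 1 1 = coordV v 6 + coordV v 7 + coordV v 8 + coordV v 9 + coordV v 10) in h1;
  last by rewrite bform4E; ring.
rewrite (_ : bform 4 6 v 1 (-1) = coordV v 6 - coordV v 7 + coordV v 8 - coordV v 9 + coordV v 10) in h2;
  last by rewrite bform4E; ring.
rewrite (_ : bform 4 6 v 1 2 = coordV v 6 + 2 * coordV v 7 + 4 * coordV v 8 + 8 * coordV v 9 + 16 * coordV v 10) in h3;
  last by rewrite bform4E; ring.
rewrite !bform4E in h0 h1 h2 h3 h4.
case=> [|[|[|[|[|k]]]]] // _ /=.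
- by rewrite addn0 -h0; ring.
- rewrite (_ : coordV v 7 = ((coordV v 6 + coordV v 7 + coordV v 8 + coordV v 9 + coordV v 10) -
     (coordV v 6 - coordV v 7 + coordV v 8 - coordV v 9 + coordV v 10)) / 2 -
     ((coordV v 6 + 2 * coordV v 7 + 4 * coordV v 8 + 8 * coordV v 9 + 16 * coordV v 10)
      - coordV v 6 - 4 * (((coordV v 6 + coordV v 7 + coordV v 8 + coordV v 9 + coordV v 10) +
     (coordV v 6 - coordV v 7 + coordV v 8 - coordV v 9 + coordV v 10)) / 2 - coordV v 6 - coordV v 10)
      - 16 * coordV v 10 - ((coordV v 6 + coordV v 7 + coordV v 8 + coordV v 9 + coordV v 10) -
     (coordV v 6 - coordV v 7 + coordV v 8 - coordV v 9 + coordV v 10))) / 6); last by field.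
  by rewrite -h1 -h2 -h3 -h0 -h4; field.
- rewrite (_ : coordV v 8 = ((coordV v 6 + coordV v 7 + coordV v 8 + coordV v 9 + coordV v 10) +
     (coordV v 6 - coordV v 7 + coordV v 8 - coordV v 9 + coordV v 10)) / 2 - coordV v 6 - coordV v 10);
     last by field.
  by rewrite -h1 -h2 -h0 -h4; field.
- rewrite (_ : coordV v 9 = ((coordV v 6 + 2 * coordV v 7 + 4 * coordV v 8 + 8 * coordV v 9 + 16 * coordV v 10)
      - coordV v 6 - 4 * (((coordV v 6 + coordV v 7 + coordV v 8 + coordV v 9 + coordV v 10) +
     (coordV v 6 - coordV v 7 + coordV v 8 - coordV v 9 + coordV v 10)) / 2 - coordV v 6 - coordV v 10)
      - 16 * coordV v 10 - ((coordV v 6 + coordV v 7 + coordV v 8 + coordV v 9 + coordV v 10) -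
     (coordV v 6 - coordV v 7 + coordV v 8 - coordV v 9 + coordV v 10))) / 6); last by field.
  by rewrite -h1 -h2 -h3 -h0 -h4; field.
- by rewrite -h4; ring.
Qed.
Lemma ext2 o a b c d (v v' : V) : o = 0%N \/ o = 3%N ->
  (forall x y, bform 2 o v' (a * x + b * y) (c * x + d * y) = bform 2 o v x y) ->
  forall k, (k <= 2)%N -> coordV v (o + k) = sub2 a b c d (fun i => coordV v' (o + i)) k.
Proof.
move=> Ho H.
have h0 := H 1 0; have h2 := H 0 1; have h1 := H 1 1.
rewrite (_ : bform 2 o v 1 0 = coordV v o) in h0; last by rewrite bform2E; ring.
rewrite (_ : bform 2 o v 0 1 = coordV v (o + 2)) in h2; last by rewrite bform2E; ring.
rewrite (_ : bform 2 o v 1 1 = coordV v o + coordV v (o + 1) + coordV v (o + 2)) in h1;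
  last by rewrite bform2E; ring.
rewrite !bform2E in h0 h1 h2.
case: Ho h0 h1 h2 => -> h0 h1 h2.
all: case=> [|[|[|k]]] // _ /=.
all: try by (rewrite -h0 + rewrite -h2); ring.
- rewrite (_ : coordV v 1 = (coordV v 0 + coordV v (0 + 1) + coordV v (0 + 2)) - coordV v 0 - coordV v (0 + 2));
    last by ring.
  by rewrite -h1 -h0 -h2; ring.
- rewrite (_ : coordV v 4 = (coordV v 3 + coordV v (3 + 1) + coordV v (3 + 2)) - coordV v 3 - coordV v (3 + 2));
    last by ring.
  by rewrite -h1 -h0 -h2; ring.
Qed.

Definition Kf o (v : V) := disc (Kco (fun i => coordV v (o + i)) (fun i => coordV v (6 + i))).

Lemma Kf_sub a b c d al ga :
  disc (Kco (sub2 a b c d al) (sub4 a b c d ga)) = (a * d - b * c) ^+ 6 * disc (Kco al ga).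
Proof.
rewrite {1}/disc !Kco_sub //.
transitivity ((a * d - b * c) ^+ 4 * disc (sub2 a b c d (Kco al ga))); first by rewrite /disc; ring.
by rewrite disc_sub; ring.
Qed.

Lemma Kf_inv o a b c d (v v' : V) : o = 0%N \/ o = 3%N -> a * d - b * c = 1 ->
  SL2_moves a b c d v v' -> Kf o v = Kf o v'.
Proof.
move=> Ho Hdet H.
have E2 : forall k, (k <= 2)%N -> coordV v (o + k) = sub2 a b c d (fun i => coordV v' (o + i)) k.
  apply: ext2 => // x y; have [H1 H2 H3] := H x y.
  by case: Ho => ->; [exact: H1 | exact: H2].
have E4 := ext4 (fun x y => let: And3 _ _ H3 := H x y in H3).
transitivity (disc (Kco (sub2 a b c d (fun i => coordV v' (o + i)))
                        (sub4 a b c d (fun i => coordV v' (6 + i))))); last first.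
  by rewrite Kf_sub Hdet expr1n mul1r.
rewrite /Kf /disc /Kco !E2 // !E4 //.
Qed.
Lemma poly_natroots (P : {poly C}) : (forall k : nat, P.[k.+1%:R] = 0) -> P = 0.
Proof.
move=> H; apply: (@roots_geq_poly_eq0 _ P [seq k.+1%:R | k <- iota 0 (size P)]).
- by apply/allP => x /mapP [k _ ->]; rewrite /root H.
- rewrite map_inj_uniq ?iota_uniq // => i j /eqP; rewrite eqr_nat => /eqP [].
  done.
- by rewrite size_map size_iota.
Qed.

Lemma poly_zero_nz (P : {poly C}) : (forall x : C, x != 0 -> P.[x] = 0) -> P = 0.
Proof. by move=> H; apply: poly_natroots => k; apply: H; rewrite pnatr_eq0. Qed.

Lemma meval_param n (q : {mpoly C[n]}) (P : 'I_n -> {poly C}) :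
  exists G : {poly C}, forall x, meval (fun i => (P i).[x]) q = G.[x].
Proof.
exists (\sum_(m <- msupp q) (q@_m)%:P * \prod_i P i ^+ m i) => x.
rewrite mevalE horner_sum; apply: eq_bigr => m _.
by rewrite hornerCM horner_prod; congr (_ * _); apply: eq_bigr => i _; rewrite horner_exp.
Qed.

Definition Xc (k : nat) : {mpoly C[11]} := 'X_(inord k).
Definition rpoly (o : nat) : {mpoly C[11]} :=
  let al i := Xc (o + i) in let ga i := Xc (6 + i) in
  (6 * al 0%N * ga 3%N - 4 * al 1%N * ga 2%N + 6 * al 2%N * ga 1%N) ^+ 2
  - 4 * (2 * al 0%N * ga 2%N - 3 * al 1%N * ga 1%N + 12 * al 2%N * ga 0%N)
      * (12 * al 0%N * ga 4%N - 3 * al 1%N * ga 3%N + 2 * al 2%N * ga 2%N).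

Lemma meval_rpoly o (v : V) : meval v (rpoly o) = 
  (6 * coordV v (o + 0) * coordV v (6 + 3) - 4 * coordV v (o + 1) * coordV v (6 + 2) + 6 * coordV v (o+2) * coordV v (6 + 1)) ^+ 2
  - 4 * (2 * coordV v (o+0) * coordV v (6+2) - 3 * coordV v (o+1) * coordV v (6+1) + 12 * coordV v (o+2) * coordV v (6+0))
      * (12 * coordV v (o+0) * coordV v (6+4) - 3 * coordV v (o+1) * coordV v (6+3) + 2 * coordV v (o+2) * coordV v (6+2)).
Proof.
rewrite /rpoly /Xc /coordV.
rewrite !expr2 !(mevalB, mevalD, mevalM, mevalMn, meval1, mevalXU); ring.
Qed.

Lemma mevalXn n (v : 'I_n -> C) (q : {mpoly C[n]}) k : meval v (q ^+ k) = meval v q ^+ k.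
Proof. by elim: k => [|k IH]; rewrite ?expr0 ?meval1 // !exprS mevalM IH. Qed.

Definition tw (t : C) (k : nat) : C := match k with
 | 0 | 3 | 7 => t^-2 | 1 | 4 | 8 => 1 | 2 | 5 | 9 => t^+2 | 6 => t^-4 | 10 => t^+4 | _ => 0 end.
Definition Tt t (v : V) := mkv (fun k => tw t k * coordV v k).

Lemma Tt_moves t (v : V) : t != 0 -> SL2_moves t 0 0 t^-1 v (Tt t v).
Proof.
move=> Ht x y; rewrite /Defs.formA /Defs.formB /Defs.formC !bform2E !bform4E /= /Tt !coordV_mkv //=.
split; field; done.
Qed.

Lemma coordV_sp a b k : (k < 11)%N ->
  coordV (special_point a b) k = if k == 0%N then a else if k == 3%N then b else if k == 9%N then 1 else 0.
Proof. by move=> H; rewrite /coordV /special_point /= inordK. Qed.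

Lemma deg3_zero p a b : SL2_invariant p -> p \is 3.-homog -> meval (special_point a b) p = 0.
Proof.
move=> Hinv Hp.
have E : Tt 'i (special_point a b) =1 (fun j => -1 * special_point a b j).
  vcase; rewrite /Tt /mkv /= ?coordV_sp // /special_point /=; rewrite ?sqrCi ?invrN1; ring.
have := Hinv 'i 0 0 'i^-1 _ _ _ (Tt_moves (special_point a b) (neq0Ci C)).
rewrite (meval_eq p E) (@meval_homog _ _ p (-1) (special_point a b) Hp).
rewrite mulfV ?(neq0Ci C) // mulr0 subr0 => /(_ erefl) H.
have : 2 * meval (special_point a b) p = 0.
  rewrite (_ : 2 * meval (special_point a b) p =
     meval (special_point a b) p - (-1) ^+ 3 * meval (special_point a b) p); last by ring.
  by rewrite H subrr.
by move/eqP; rewrite mulf_eq0 pnatr_eq0 /= => /eqP.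
Qed.

Lemma part2 p : SL2_invariant p -> (p \is 2.-homog \/ p \is 3.-homog) ->
  forall a b, meval (special_point a b) p = 0.
Proof.
move=> Hinv [H|H] a b; first exact: deg2_zero.
exact: deg3_zero.
Qed.
Lemma scale4 (q : {mpoly C[11]}) nu a b : SL2_invariant q -> q \is 4.-homog -> nu != 0 ->
  meval (special_point (nu * a) (nu * b)) q = nu ^+ 2 * meval (special_point a b) q.
Proof.
move=> Hinv Hq Hnu.
pose t := 4.-root (nu^-1).
have Ht4 : t ^+ 4 = nu^-1 by rewrite /t rootCK.
have Ht : t != 0.
  apply/eqP => t0; move: Ht4; rewrite t0 expr0n /= => /esym /eqP; rewrite invr_eq0.
  by rewrite (negbTE Hnu).
have Enu : nu = (t ^+ 4)^-1 by rewrite Ht4 invrK.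
have E : Tt t (special_point a b) =1 (fun j => t ^+ 2 * special_point (nu * a) (nu * b) j).
  vcase; rewrite /Tt /mkv /= ?coordV_sp // /special_point /=; try rewrite Enu; field; done.
have := Hinv t 0 0 t^-1 _ _ _ (Tt_moves (special_point a b) Ht).
rewrite (meval_eq q E) (@meval_homog _ _ q (t ^+ 2) _ Hq).
rewrite mulfV // mulr0 subr0 => /(_ erefl) <-.
rewrite mulrA (_ : nu ^+ 2 * (t ^+ 2) ^+ 4 = 1) ?mul1r //.
rewrite Enu; field; done.
Qed.

Lemma find_zero (q : {mpoly C[11]}) : SL2_invariant q -> q \is 4.-homog ->
  (exists x, meval (special_point 1 x) q = 0) \/ meval (special_point 0 1) q = 0.
Proof.
move=> Hinv Hq.
pose P0 : 'I_11 -> {poly C} := fun i =>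
  if val i == 0%N then 1 else if val i == 3%N then 'X else if val i == 9%N then 1 else 0.
have [G HG] := meval_param q P0.
have EG x : meval (special_point 1 x) q = G.[x].
  rewrite -HG; apply: meval_eq => i; rewrite /P0 /special_point.
  case: (_ == 0)%N; first by rewrite hornerC.
  case: (_ == 3)%N; first by rewrite hornerX.
  by case: (_ == 9)%N; rewrite hornerC.
have [/closed_rootP [x Hx]|] := boolP (size G != 1).
  by left; exists x; rewrite EG; exact/eqP.
rewrite negbK => /size_poly1P [c Hc EGc].
right.
pose P1 : 'I_11 -> {poly C} := fun i =>
  if val i == 0%N then 'X else if val i == 3%N then 1 else if val i == 9%N then 1 else 0.
have [H HH] := meval_param q P1.
have EH x : meval (special_point x 1) q = H.[x].
  rewrite -HH; apply: meval_eq => i; rewrite /P1 /special_point.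
  case: (_ == 0)%N; first by rewrite hornerX.
  case: (_ == 3)%N; first by rewrite hornerC.
  by case: (_ == 9)%N; rewrite hornerC.
have : H - c *: 'X^2 = 0.
  apply: poly_zero_nz => x Hx.
  rewrite hornerD hornerN hornerZ hornerXn -EH.
  have := scale4 1 (x^-1) Hinv Hq Hx.
  rewrite mulr1 mulfV // EG EGc hornerC => ->.
  by rewrite mulrC subrr.
move/eqP; rewrite subr_eq0 => /eqP EHc.
by rewrite EH EHc hornerZ hornerXn expr0n mulr0.
Qed.

Lemma rpoly_Kf o (w : V) : meval w (rpoly o) = Kf o w.
Proof. by rewrite meval_rpoly /Kf /disc /Kco /=; ring. Qed.

Lemma rpoly_inv o : o = 0%N \/ o = 3%N -> SL2_invariant (rpoly o).
Proof.
move=> Ho a b c d Hdet v v' Hm.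
by rewrite !rpoly_Kf (Kf_inv Ho Hdet Hm).
Qed.

Lemma rpoly_sp0 a b : meval (special_point a b) (rpoly 0) = 36 * a ^+ 2.
Proof. by rewrite meval_rpoly !coordV_sp //=; ring. Qed.
Lemma rpoly_sp3 a b : meval (special_point a b) (rpoly 3) = 36 * b ^+ 2.
Proof. by rewrite meval_rpoly !coordV_sp //=; ring. Qed.

Lemma rpoly_scale o (v : V) l : meval (fun j => l * v j) (rpoly o) = l ^+ 4 * meval v (rpoly o).
Proof. by rewrite !meval_rpoly /coordV; ring. Qed.

Lemma no_integral (f : 'I_8 -> {mpoly C[11]}) (v0 : V) r :
  R_integral_over f -> SL2_invariant r ->
  (forall l i, meval (fun j => l * v0 j) (f i) = 0) ->
  (forall l, meval (fun j => l * v0 j) r = l ^+ 4 * meval v0 r) ->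
  meval v0 r != 0 -> False.
Proof.
move=> Hint Hr Hf Hsc Hrho.
have [n [s [Hs Hrel]]] := Hint r Hr.
have Hc : forall i l, meval (fun j => l * v0 j) (s i) = meval (fun j => 0 * v0 j) (s i).
  move=> i l; have [Q ->] := Hs i; rewrite !comp_mpoly_meval.
  by apply: meval_eq => j; rewrite !tnth_mktuple !Hf.
pose P : {poly C} := 'X^n + \sum_(i < n) (meval (fun j => 0 * v0 j) (s i))%:P * 'X^i.
have P0 : P = 0.
  apply: poly_zero_nz => z _.
  pose l := 4.-root (z / meval v0 r).
  have Hl : l ^+ 4 * meval v0 r = z by rewrite /l rootCK // mulfVK.
  have := congr1 (meval (fun j => l * v0 j)) Hrel.
  rewrite mevalD meval0 mevalXn Hsc Hl => E.
  rewrite -E /P hornerD hornerXn horner_sum; congr (_ + _).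
  rewrite (big_morph _ (mevalD _) (meval0 _)); apply: eq_bigr => i _.
  by rewrite hornerCM hornerXn mevalM mevalXn Hsc Hl Hc.
have := congr1 (fun p : {poly C} => p`_n) P0.
rewrite /P coefD coefXn eqxx coef_sum big1 ?addr0.
  by rewrite coef0 => /eqP; rewrite pnatr_eq0.
by move=> i _; rewrite coefCM coefXn eq_sym (ltn_eqF (ltn_ord i)) mulr0.
Qed.
End S.

Theorem mainTheorem10 (C : numClosedFieldType) :
  ~ (exists f : 'I_8 -> {mpoly C[11]},
        is_hsop f /\ forall i, f i \is (hsop_degs i).-homog)
  /\
  (forall p : {mpoly C[11]}, SL2_invariant p ->
     (p \is 2.-homog \/ p \is 3.-homog) ->
     forall a b : C, meval (special_point a b) p = 0).
Proof.
split; last by move=> p Hinv Hh a b; exact: part2.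
move=> [f [[Hinvf _ _ Hint] Hhom]].
have Hz : forall i : 'I_8, (i < 7)%N -> forall a b, meval (special_point a b) (f i) = 0.
  move=> [i Hi] Hi7 a b; apply: (part2 (Hinvf _) _ a b).
  have := Hhom (Ordinal Hi).
  case: i Hi Hi7 => [|[|[|[|[|[|[|i]]]]]]] Hi Hi7 //= H; first [by left | by right].
pose i7 : 'I_8 := Ordinal (isT : (7 < 8)%N).
have H7 : f i7 \is 4.-homog := Hhom i7.
have Hfall : forall a b, meval (special_point a b) (f i7) = 0 ->
    forall l i, meval (fun j => l * special_point a b j) (f i) = 0.
  move=> a b h0 l i; rewrite (meval_homog _ _ (Hhom i)).
  have [Hi|Hi] := ltnP i 7; first by rewrite Hz ?mulr0.
  have -> : i = i7 by apply: val_inj; apply/eqP; rewrite eqn_leq Hi -ltnS ltn_ord.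
  by rewrite h0 mulr0.
case: (find_zero (Hinvf i7) H7) => [[x Hx]|H01].
- apply: (no_integral (v0 := special_point 1 x) (r := rpoly C 0) Hint).
  + by apply: rpoly_inv; left.
  + exact: Hfall Hx.
  + by move=> l; rewrite rpoly_scale.
  + by rewrite rpoly_sp0 expr1n mulr1 pnatr_eq0.
- apply: (no_integral (v0 := special_point 0 1) (r := rpoly C 3) Hint).
  + by apply: rpoly_inv; right.
  + exact: Hfall H01.
  + by move=> l; rewrite rpoly_scale.
  + by rewrite rpoly_sp3 expr1n mulr1 pnatr_eq0.
Qed.
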